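(* Let $M\in\mathbb{N}$, $M\ge2$, and let $r$ be a strong solution of the BVP. Then the function $z$ (viewed as a radial function $x\mapsto z(|x|)$ on $\overline B\setminus\{0\}$) satisfies the strong maximum principle on $\overline B\setminus\{0\}$: if $z$ attains its maximum over a connected open set $U\subset B\setminus\{0\}$ at a point of $U$, then $z$ is constant on $U$.
   Context: Let $B\subset\mathbb{R}^2$ be the open unit ball. Fix constants $\gamma>0$, $s_0\ge0$, $\kappa\ge-\gamma s_0$ and a convex function $\rho\in C^\infty(\mathbb{R})$ with $\rho(s)=0$ for $s\le0$, $\rho(s)=\gamma s+\kappa$ for $s\ge s_0$, and $\rho=\rho_1$ on $[0,s_0]$ where $\rho_1$ is smooth and convex with $\rho_1(0)=0$, $\rho_1(s_0)=\gamma s_0+\kappa$. For $M\in\mathbb{N}\setminus\{0\}$ and a function $r$ on $(0,1]$ let $d(R)=\frac{Mr(R)\dot r(R)}{R}$ and $Lr(R)=\frac{M^2r}{R}-\dot r-R\ddot r$. A strong solution of the BVP is a function $r\in C([0,1])\cap C^\infty((0,1])$ with $Lr=M\rho''(d)\dot d\,r$ on $(0,1)$, $r(0)=0$ and $r(1)=1$. Let $f(s)=s\rho'(s)-\rho(s)$ and $z(R)=\frac{\dot r(R)^2}{2}+\frac{M^2r(R)^2}{2R^2}+f(d(R))$ for $R\in(0,1]$; this equals $\frac12|\nabla u|^2+f(\det\nabla u)$ for $u=r(R)(\cos M\theta,\sin M\theta)^T$. *)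

(* Defs.v *)
From Stdlib Require Import Reals.
From Coquelicot Require Import Coquelicot.
Open Scope R_scope.

Definition smooth_R (f : R -> R) : Prop := forall (n : nat) (x : R), ex_derive_n f n x.

Definition convex_R (f : R -> R) : Prop :=
  forall x y t : R, 0 <= t <= 1 -> f (t * x + (1 - t) * y) <= t * f x + (1 - t) * f y.

(* The standing assumptions on rho, with constants gamma, s0, kappa.
   (The auxiliary rho_1 of the paper is just the restriction of rho to [0,s0];
   its properties follow from those of rho.) *)
Definition admissible_rho (gamma s0 kappa : R) (rho : R -> R) : Prop :=
  0 < gamma /\ 0 <= s0 /\ kappa >= - gamma * s0 /\
  smooth_R rho /\ convex_R rho /\
  (forall s, s <= 0 -> rho s = 0) /\
  (forall s, s >= s0 -> rho s = gamma * s + kappa).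

(* C^infinity on (0,1]: all derivatives exist on (0,1) and each extends
   continuously (has a finite left limit) at 1. *)
Definition smooth_0_1 (r : R -> R) : Prop :=
  (forall (n : nat) (x : R), 0 < x < 1 -> ex_derive_n r n x) /\
  (forall n : nat, exists l : R,
      filterlim (Derive_n r n) (at_left 1) (locally l)).

Definition continuous_0_1 (r : R -> R) : Prop :=
  forall x, 0 <= x <= 1 ->
    filterlim r (within (fun y => 0 <= y <= 1) (locally x)) (locally (r x)).

Definition dfun (M : nat) (r : R -> R) (x : R) : R :=
  INR M * r x * Derive r x / x.

Definition Lop (M : nat) (r : R -> R) (x : R) : R :=
  (INR M) ^ 2 * r x / x - Derive r x - x * Derive (Derive r) x.

Definition strong_solution (M : nat) (rho : R -> R) (r : R -> R) : Prop :=
  continuous_0_1 r /\ smooth_0_1 r /\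
  (forall x, 0 < x < 1 ->
     Lop M r x = INR M * Derive_n rho 2 (dfun M r x) * Derive (dfun M r) x * r x) /\
  r 0 = 0 /\ r 1 = 1.

Definition ffun (rho : R -> R) (s : R) : R := s * Derive rho s - rho s.

Definition zfun (M : nat) (rho r : R -> R) (x : R) : R :=
  (Derive r x) ^ 2 / 2 + (INR M) ^ 2 * (r x) ^ 2 / (2 * x ^ 2) + ffun rho (dfun M r x).

Definition norm2 (x : R * R) : R := sqrt (fst x ^ 2 + snd x ^ 2).

Definition connected2 (U : R * R -> Prop) : Prop :=
  forall V W : R * R -> Prop, open V -> open W ->
    (forall x, U x -> V x \/ W x) ->
    (forall x, U x -> V x -> W x -> False) ->
    (forall x, U x -> ~ V x) \/ (forall x, U x -> ~ W x).

(* Main.v *)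
Require Import Defs.
From Stdlib Require Import Reals Lra Psatz.
From Coquelicot Require Import Coquelicot.
Open Scope R_scope.

Lemma isd_cont f x l : is_derive f x l -> continuity_pt f x.
Proof. intros H. apply derivable_continuous_pt. exists l. apply is_derive_Reals; exact H. Qed.

Lemma mvt_h f df a b : a < b -> (forall t, a <= t <= b -> is_derive f t (df t)) ->
  exists c, a <= c <= b /\ f b - f a = df c * (b - a).
Proof.
  intros Hab H.
  destruct (MVT_gen f a b df) as [c [Hc E]].
  - intros t Ht. rewrite Rmin_left, Rmax_right in Ht by lra. apply H; lra.
  - intros t Ht. rewrite Rmin_left, Rmax_right in Ht by lra. eapply isd_cont. apply H; lra.
  - rewrite Rmin_left, Rmax_right in Hc by lra. exists c; split; auto.
Qed.

Lemma mono_h f df a b : a <= b -> (forall t, a <= t <= b -> is_derive f t (df t)) ->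
  (forall t, a <= t <= b -> 0 <= df t) -> f a <= f b.
Proof.
  intros Hab H Hp. destruct (Req_dec a b) as [->|Hne]; [lra|].
  destruct (mvt_h f df a b) as [c [Hc E]]; [lra|auto|].
  assert (0 <= df c) by (apply Hp; lra). nra.
Qed.

Lemma mono_h' f df a b : a <= b -> (forall t, a <= t <= b -> is_derive f t (df t)) ->
  (forall t, a <= t <= b -> df t <= 0) -> f b <= f a.
Proof.
  intros Hab H Hp.
  assert (- f a <= - f b); [|lra].
  apply (mono_h (fun t => - f t) (fun t => - df t)); auto.
  - intros t Ht. apply (is_derive_opp f t (df t)). apply H; auto.
  - intros t Ht. specialize (Hp t Ht). lra.
Qed.

Lemma rho2_nonneg gamma s0 kappa rho s :
  admissible_rho gamma s0 kappa rho -> 0 <= Derive (Derive rho) s.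
Proof.
  intros (_ & _ & _ & Hsm & Hcv & _ & _).
  assert (D1 : forall y, is_derive rho y (Derive rho y)).
  { intro y. apply Derive_correct. exact (Hsm 1%nat y). }
  assert (D2 : is_derive (Derive rho) s (Derive (Derive rho) s)).
  { apply Derive_correct. exact (Hsm 2%nat s). }
  set (k := Derive (Derive rho) s) in *.
  destruct (Rle_or_lt 0 k) as [|Hk]; [auto|exfalso].
  apply is_derive_Reals in D2.
  destruct (D2 (- k / 2)) as [d Hd]; [lra|].
  assert (Hg : forall h, 0 < h < d -> Derive rho (s + h) - Derive rho (s - h) < 0).
  { intros h Hh.
    assert (E1 := Hd h ltac:(lra) ltac:(rewrite Rabs_pos_eq; lra)).
    assert (E2 := Hd (-h) ltac:(lra) ltac:(rewrite Rabs_Ropp, Rabs_pos_eq; lra)).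
    apply Rabs_def2 in E1. apply Rabs_def2 in E2. destruct E1 as [E1 _]. destruct E2 as [E2 _].
    replace (s + - h) with (s - h) in E2 by ring.
    assert (F1 : Derive rho (s + h) - Derive rho s < h * (k/2)).
    { assert (Hq: (Derive rho (s + h) - Derive rho s) / h < k/2) by lra.
      apply (Rmult_lt_compat_l h) in Hq; [|lra].
      replace (h * ((Derive rho (s + h) - Derive rho s) / h)) with (Derive rho (s + h) - Derive rho s) in Hq by (field; lra).
      lra. }
    assert (F2 : Derive rho (s - h) - Derive rho s > - h * (k/2)).
    { assert (Hq: (Derive rho (s - h) - Derive rho s) / - h < k/2) by lra.
      apply (Rmult_lt_compat_l h) in Hq; [|lra].
      replace (h * ((Derive rho (s - h) - Derive rho s) / - h)) with (- (Derive rho (s - h) - Derive rho s)) in Hq by (field; lra).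
      lra. }
    nra. }
  set (phi := fun h => rho (s + h) + rho (s - h) - 2 * rho s).
  assert (Hphi0 : forall h, 0 <= phi h).
  { intro h. unfold phi.
    assert (C := Hcv (s + h) (s - h) (1/2) ltac:(lra)).
    replace (1 / 2 * (s + h) + (1 - 1 / 2) * (s - h)) with s in C by field. lra. }
  assert (Dphi : forall h, is_derive phi h (Derive rho (s + h) - Derive rho (s - h))).
  { intro h. unfold phi.
    auto_derive.
    - repeat split; eexists; apply D1.
    - change (Derive (fun x => rho x)) with (Derive rho). replace (s + - h) with (s - h) by ring. ring. }
  assert (Hz : forall h, 0 < h < d -> phi h = 0).
  { intros h Hh.
    destruct (mvt_h phi (fun h => Derive rho (s + h) - Derive rho (s - h)) 0 h) as [c [Hc E]]; [lra|intros; apply Dphi|].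
    assert (Hgc : Derive rho (s + c) - Derive rho (s - c) <= 0).
    { destruct (Req_dec c 0) as [->|Hc0].
      - replace (s + 0) with (s - 0) by ring. lra.
      - left. apply Hg. lra. }
    assert (phi 0 = 0) by (unfold phi; replace (s+0) with s by ring; replace (s-0) with s by ring; ring).
    specialize (Hphi0 h). nra. }
  set (h := d / 2).
  destruct (mvt_h phi (fun h => Derive rho (s + h) - Derive rho (s - h)) (h/2) h) as [c [Hc E]];
    [unfold h; destruct d; simpl in *; lra|intros; apply Dphi|].
  assert (Hd0 : 0 < d) by (destruct d; simpl; lra).
  rewrite (Hz h) in E by (unfold h; lra). rewrite (Hz (h/2)) in E by (unfold h; lra).
  assert (Derive rho (s + c) - Derive rho (s - c) < 0) by (apply Hg; unfold h in *; lra).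
  unfold h in *. nra.
Qed.

Definition wfun (M:nat) (r:R->R) x :=
  -((Derive r x)^2 - 2*INR M*Derive r x*(INR M*r x/x) + (INR M*r x/x)^2).

Lemma dfun_deriv M r x : x <> 0 -> ex_derive r x -> ex_derive (Derive r) x ->
  Derive (dfun M r) x = INR M*(Derive r x*Derive r x + r x*Derive (Derive r) x)/x - INR M*r x*Derive r x/x^2.
Proof.
  intros Hx H1 H2. apply is_derive_unique. unfold dfun.
  auto_derive.
  - repeat split; auto.
  - change (Derive (fun x0 => r x0) x) with (Derive r x).
    change (Derive (fun x0 => Derive r x0) x) with (Derive (Derive r) x).
    field; auto.
Qed.

Lemma z_deriv M rho r x : smooth_R rho ->
  (forall n x, 0 < x < 1 -> ex_derive_n r n x) ->
  (forall x, 0 < x < 1 ->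
     Lop M r x = INR M * Derive_n rho 2 (dfun M r x) * Derive (dfun M r) x * r x) ->
  0 < x < 1 -> is_derive (zfun M rho r) x (wfun M r x / x).
Proof.
  intros Hsm Hd Hode Hx.
  assert (H1 : ex_derive r x) by exact (Hd 1%nat x Hx).
  assert (H2 : ex_derive (Derive r) x) by exact (Hd 2%nat x Hx).
  assert (Ho := Hode x Hx). unfold Lop in Ho.
  rewrite dfun_deriv in Ho by (auto; lra).
  change (Derive_n rho 2 (dfun M r x)) with (Derive (Derive rho) (dfun M r x)) in Ho.
  unfold zfun, ffun, dfun.
  auto_derive.
  - repeat split; auto; try lra; try (exact (Hsm 2%nat _)); try (exact (Hsm 1%nat _)); intro Hc; nra.
  - change (Derive (fun x0 => r x0) x) with (Derive r x).
    change (Derive (fun x0 => Derive r x0) x) with (Derive (Derive r) x).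
    change (Derive (fun x0 => rho x0)) with (Derive rho).
    change (Derive (fun x0 => Derive rho x0)) with (Derive (Derive rho)).
    unfold dfun in Ho.
    set (a := Derive r x) in *. set (a1 := Derive (Derive r) x) in *.
    set (r0 := r x) in *. set (m := INR M) in *.
    set (k := Derive (Derive rho) (m * r0 * a / x)) in *.
    set (D1 := Derive rho (m * r0 * a * / x)).
    replace (m * r0 * a * / x) with (m * r0 * a / x) by (unfold Rdiv; ring).
    set (k' := Derive (Derive rho) (m * r0 * a / x)).
    change k' with k.
    unfold wfun; fold a a1 r0 m.
    apply Rminus_diag_uniq.
    match goal with |- ?L - ?R = 0 => 
      transitivity ((a/x) * (m * k * (m * (a * a + r0 * a1) / x - m * r0 * a / x ^ 2) * r0
                 - (m ^ 2 * r0 / x - a - x * a1))) end.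
    + field; lra.
    + rewrite <- Ho. ring.
Qed.

Definition cfun (M:nat) (rho r:R->R) x :=
  2*Derive (Derive rho) (dfun M r x)*INR M*Derive r x*(INR M*r x/x)
   /(x*(1+Derive (Derive rho) (dfun M r x)*(INR M*r x/x)^2)).
Lemma alg_core (m x r0 a a1 k : R) :
  0 < x -> 0 <= k -> 1 <= m ->
  m^2 * r0 / x - a - x * a1 = m * k * (m*(a*a + r0*a1)/x - m*r0*a/x^2) * r0 ->
  let b := m * r0 / x in
  let w := -(a^2 - 2*m*a*b + b^2) in
  let w' := -(2*a*a1 - 2*m*(a1*b + a*(m*a/x - m*r0/x^2)) + 2*b*(m*a/x - m*r0/x^2)) in
  let c := 2*k*m*a*b/(x*(1+k*b^2)) in
  0 <= w' + c * w.
Proof.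
  intros Hx Hk Hm H b w w' c.
  assert (Hb : m * r0 = b * x) by (unfold b; field; lra).
  assert (Hpos : 0 < 1 + k*b^2) by nra.
  assert (HA : x*a1*(1+k*b^2) = m*b - a - k*a*b*(m*a-b)).
  { assert (E1: m^2*r0/x = m*b) by (unfold b; field; lra).
    assert (E2: m * k * (m*(a*a + r0*a1)/x - m*r0*a/x^2) * r0
              = k*b*(m*a^2 + x*b*a1 - b*a)).
    { unfold b; field; lra. }
    rewrite E1, E2 in H. nra. }
  assert (Hw' : w' = (-2*(a - m*b)*(x*a1*(1+k*b^2)) + 2*(1+k*b^2)*(m*a-b)^2)/(x*(1+k*b^2))).
  { unfold w'; replace (m*r0/x^2) with (b/x) by (unfold b; field; lra). field; lra. }
  assert (Hc : c * w = -2*k*m*a*b*(a^2 - 2*m*a*b + b^2)/(x*(1+k*b^2))).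
  { unfold c, w; field; lra. }
  rewrite Hw', Hc, HA.
  assert (E : (-2*(a - m*b)*(m*b - a - k*a*b*(m*a-b)) + 2*(1+k*b^2)*(m*a-b)^2)/(x*(1+k*b^2))
     + -2*k*m*a*b*(a^2 - 2*m*a*b + b^2)/(x*(1+k*b^2))
     = (2*(a-m*b)^2 + 2*k*(m^2-1)*(a*b)^2 + 2*(1+k*b^2)*(m*a-b)^2)/(x*(1+k*b^2))).
  { field; lra. }
  rewrite E. apply Rmult_le_pos.
  - assert (0 <= k*(m^2-1)*(a*b)^2).
    { apply Rmult_le_pos; [apply Rmult_le_pos; nra| nra]. }
    assert (0 <= (a-m*b)^2) by apply pow2_ge_0.
    assert (0 <= (1+k*b^2)*(m*a-b)^2) by (apply Rmult_le_pos; [lra|apply pow2_ge_0]).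
    lra.
  - left; apply Rinv_0_lt_compat; nra.
Qed.

Lemma w_ineq M rho r x : (2 <= M)%nat -> smooth_R rho -> (forall s, 0 <= Derive (Derive rho) s) ->
  (forall n x, 0 < x < 1 -> ex_derive_n r n x) ->
  (forall x, 0 < x < 1 ->
     Lop M r x = INR M * Derive_n rho 2 (dfun M r x) * Derive (dfun M r) x * r x) ->
  0 < x < 1 -> ex_derive (wfun M r) x /\
    0 <= Derive (wfun M r) x + cfun M rho r x * wfun M r x.
Proof.
  intros HM Hsm Hk Hd Hode Hx.
  assert (H1 : ex_derive r x) by exact (Hd 1%nat x Hx).
  assert (H2 : ex_derive (Derive r) x) by exact (Hd 2%nat x Hx).
  assert (Ho := Hode x Hx). unfold Lop in Ho.
  rewrite dfun_deriv in Ho by (auto; lra).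
  change (Derive_n rho 2 (dfun M r x)) with (Derive (Derive rho) (dfun M r x)) in Ho.
  assert (Hm : 1 <= INR M) by (apply (le_INR 1); lia).
  assert (Hkx := Hk (dfun M r x)).
  set (a := Derive r x) in *. set (a1 := Derive (Derive r) x) in *.
  set (r0 := r x) in *. set (m := INR M) in *.
  set (k := Derive (Derive rho) (dfun M r x)) in *.
  assert (Dw : is_derive (wfun M r) x
    (-(2*a*a1 - 2*m*(a1*(m*r0/x) + a*(m*a/x - m*r0/x^2)) + 2*(m*r0/x)*(m*a/x - m*r0/x^2)))).
  { unfold wfun. auto_derive.
    - repeat split; auto; lra.
    - change (Derive (fun x0 => r x0) x) with (Derive r x).
      change (Derive (fun x0 => Derive r x0) x) with (Derive (Derive r) x).
      fold a a1 r0 m. field. lra. }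
  split; [eexists; exact Dw|].
  rewrite (is_derive_unique _ _ _ Dw).
  assert (C := alg_core m x r0 a a1 k ltac:(lra) Hkx Hm Ho). simpl in C.
  unfold cfun, wfun. fold a r0 m k. exact C.
Qed.

Lemma c_cont M rho r x : smooth_R rho -> (forall s, 0 <= Derive (Derive rho) s) ->
  (forall n x, 0 < x < 1 -> ex_derive_n r n x) -> 0 < x < 1 ->
  continuous (cfun M rho r) x.
Proof.
  intros Hsm Hk Hd Hx.
  assert (H1 : ex_derive r x) by exact (Hd 1%nat x Hx).
  assert (H2 : ex_derive (Derive r) x) by exact (Hd 2%nat x Hx).
  apply (@ex_derive_continuous R_AbsRing R_NormedModule). unfold cfun, dfun.
  assert (Hkk := Hk (INR M * r x * Derive r x / x)).
  auto_derive.
  repeat split; auto; try lra; try exact (Hsm 3%nat _).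
  intro Hc. apply Rmult_integral in Hc. destruct Hc as [Hc|Hc]; [lra|].
  unfold Rdiv in Hkk.
  assert (0 <= Derive (Derive rho) (INR M * r x * Derive r x * / x) *
      ((INR M * r x * / x) * ((INR M * r x * / x) * 1))).
  { apply Rmult_le_pos; [exact Hkk|]. nra. }
  lra.
Qed.

Lemma ball_R (t : R) (e : posreal) (b : R) : ball t e b -> Rabs (b - t) < e.
Proof. intro H. exact H. Qed.

Lemma gron (w c : R -> R) R0 : 0 < R0 < 1 ->
  (forall t, 0 < t < 1 -> continuous c t) ->
  (forall t, 0 < t < 1 -> ex_derive w t /\ 0 <= Derive w t + c t * w t) ->
  w R0 = 0 -> forall t, 0 < t < 1 -> (R0 <= t -> 0 <= w t) /\ (t <= R0 -> w t <= 0).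
Proof.
  intros HR0 Hc Hw HwR0.
  assert (HI : forall u, 0 < u < 1 -> ex_RInt c R0 u).
  { intros u Hu. apply (@ex_RInt_continuous R_CompleteNormedModule). intros z Hz. apply Hc.
    split; [apply Rlt_le_trans with (Rmin R0 u) | apply Rle_lt_trans with (Rmax R0 u)];
      try tauto; [apply Rmin_glb_lt|apply Rmax_lub_lt]; lra. }
  assert (DC : forall t, 0 < t < 1 -> is_derive (RInt c R0) t (c t)).
  { intros t Ht. apply (is_derive_RInt c (RInt c R0) R0 t); [|apply Hc; auto].
    assert (He : 0 < Rmin t (1 - t)) by (apply Rmin_glb_lt; lra).
    exists (mkposreal _ He). intros b Hb. apply ball_R in Hb. simpl in Hb.
    apply (@RInt_correct R_CompleteNormedModule). apply HI.
    assert (Rmin t (1 - t) <= t) by apply Rmin_l.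
    assert (Rmin t (1 - t) <= 1 - t) by apply Rmin_r.
    apply Rabs_def2 in Hb. lra. }
  set (g := fun t => exp (RInt c R0 t) * w t).
  assert (Dg : forall t, 0 < t < 1 -> is_derive g t (exp (RInt c R0 t) * (Derive w t + c t * w t))).
  { intros t Ht. unfold g.
    evar_last.
    { apply (is_derive_mult (fun t => exp (RInt c R0 t)) w).
      - apply (is_derive_comp exp (RInt c R0)). apply is_derive_exp. apply DC; auto.
      - apply Derive_correct. apply Hw; auto.
      - intros; apply Rmult_comm. }
    simpl. unfold plus, mult, scal; simpl. unfold mult; simpl. ring. }
  assert (Dg0 : forall t, 0 < t < 1 -> 0 <= exp (RInt c R0 t) * (Derive w t + c t * w t)).
  { intros t Ht. apply Rmult_le_pos; [left; apply exp_pos|apply Hw; auto]. }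
  assert (g0 : g R0 = 0) by (unfold g; rewrite HwR0; ring).
  intros t Ht. split; intro Hle.
  - assert (g R0 <= g t).
    { apply (mono_h g (fun t => exp (RInt c R0 t) * (Derive w t + c t * w t))); auto.
      - intros u Hu; apply Dg; lra.
      - intros u Hu; apply Dg0; lra. }
    rewrite g0 in H. unfold g in H.
    assert (0 < exp (RInt c R0 t)) by apply exp_pos. nra.
  - assert (g t <= g R0).
    { apply (mono_h g (fun t => exp (RInt c R0 t) * (Derive w t + c t * w t))); auto.
      - intros u Hu; apply Dg; lra.
      - intros u Hu; apply Dg0; lra. }
    rewrite g0 in H. unfold g in H.
    assert (0 < exp (RInt c R0 t)) by apply exp_pos. nra.
Qed.

Lemma local_max (U : R * R -> Prop) (x0 : R * R) (F : R -> R) :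
  open U -> U x0 -> 0 < norm2 x0 ->
  (forall x, U x -> F (norm2 x) <= F (norm2 x0)) ->
  exists d, 0 < d /\ forall t, Rabs (t - norm2 x0) < d -> F t <= F (norm2 x0).
Proof.
  intros HU Hx0 Hpos Hmax.
  destruct (HU x0 Hx0) as [eps Heps].
  set (R0 := norm2 x0) in *.
  destruct x0 as [x1 x2].
  assert (He : 0 < eps) by apply cond_pos.
  exists (Rmin eps R0). split; [apply Rmin_glb_lt; lra|].
  intros t Ht.
  assert (Hm1 : Rmin eps R0 <= eps) by apply Rmin_l.
  assert (Hm2 : Rmin eps R0 <= R0) by apply Rmin_r.
  assert (Htp : 0 < t) by (apply Rabs_def2 in Ht; lra).
  set (l := t / R0).
  assert (Hl : 0 < l) by (unfold l; apply Rdiv_lt_0_compat; lra).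
  set (y := (l * x1, l * x2)).
  assert (Hx1 : Rabs x1 <= R0).
  { unfold R0, norm2; simpl. rewrite <- sqrt_Rsqr_abs. apply sqrt_le_1_alt.
    unfold Rsqr. nra. }
  assert (Hx2 : Rabs x2 <= R0).
  { unfold R0, norm2; simpl. rewrite <- sqrt_Rsqr_abs. apply sqrt_le_1_alt.
    unfold Rsqr. nra. }
  assert (Hcomp : forall z, Rabs z <= R0 -> Rabs (l * z - z) < eps).
  { intros z Hz.
    replace (l * z - z) with ((t - R0) * (z / R0)) by (unfold l; field; lra).
    rewrite Rabs_mult.
    assert (Rabs (z / R0) <= 1).
    { unfold Rdiv. rewrite Rabs_mult, Rabs_inv, (Rabs_pos_eq R0) by lra.
      apply (Rmult_le_reg_r R0); [lra|]. rewrite Rmult_assoc, Rinv_l by lra. lra. }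
    assert (0 <= Rabs (t - R0)) by apply Rabs_pos.
    nra. }
  assert (Hy : U y).
  { apply Heps. split; simpl; [apply Hcomp, Hx1 | apply Hcomp, Hx2]. }
  assert (Hny : norm2 y = t).
  { unfold norm2, y; simpl.
    replace (l * x1 * (l * x1 * 1) + l * x2 * (l * x2 * 1)) with (l ^ 2 * (x1 * (x1 * 1) + x2 * (x2 * 1))) by ring.
    rewrite sqrt_mult_alt by (apply pow2_ge_0). rewrite sqrt_pow2 by lra.
    change (l * norm2 (x1, x2) = t). fold R0. unfold l. field. lra. }
  rewrite <- Hny. apply Hmax. exact Hy.
Qed.

Theorem lemma2p4 (gamma s0 kappa : R) (rho : R -> R) (M : nat) (r : R -> R) :
  admissible_rho gamma s0 kappa rho ->
  (2 <= M)%nat ->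
  strong_solution M rho r ->
  forall U : R * R -> Prop,
    open U -> connected2 U ->
    (forall x, U x -> 0 < norm2 x < 1) ->
    forall x0, U x0 ->
      (forall x, U x -> zfun M rho r (norm2 x) <= zfun M rho r (norm2 x0)) ->
      forall x, U x -> zfun M rho r (norm2 x) = zfun M rho r (norm2 x0).
Proof.
  intros Hrho HM Hsol U HU _ Hnorm x0 Hx0 Hmax x Hx.
  assert (Hk : forall s, 0 <= Derive (Derive rho) s) by (intro s; exact (rho2_nonneg _ _ _ _ s Hrho)).
  destruct Hrho as (_ & _ & _ & Hsm & _).
  destruct Hsol as (_ & (Hd & _) & Hode & _ & _).
  assert (HR0 := Hnorm x0 Hx0).
  destruct (local_max U x0 (zfun M rho r) HU Hx0 ltac:(lra) Hmax) as [d [Hdp Hloc]].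
  set (R0 := norm2 x0) in *.
  assert (Hz : forall t, 0 < t < 1 -> is_derive (zfun M rho r) t (wfun M r t / t)).
  { intros t Ht. apply z_deriv; auto. }
  assert (Hw0 : wfun M r R0 = 0).
  { assert (HzR := proj1 (is_derive_Reals _ _ _) (Hz R0 HR0)).
    set (pr := exist (fun l => derivable_pt_abs (zfun M rho r) R0 l) _ HzR : derivable_pt (zfun M rho r) R0).
    assert (E := deriv_maximum (zfun M rho r) (R0 - d) (R0 + d) R0 pr ltac:(lra) ltac:(lra)
      ltac:(intros y H1 H2; apply Hloc; apply Rabs_def1; lra)).
    simpl in E. apply (Rmult_eq_reg_r (/ R0)); [|apply Rinv_neq_0_compat; lra].
    unfold Rdiv in E. rewrite E. ring. }
  assert (Hsign := gron (wfun M r) (cfun M rho r) R0 HR0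
     ltac:(intros t Ht; apply c_cont; auto)
     ltac:(intros t Ht; apply w_ineq; auto) Hw0).
  assert (Hx' := Hnorm x Hx). set (t := norm2 x) in *.
  apply Rle_antisym; [apply Hmax; exact Hx|].
  destruct (Rle_or_lt R0 t) as [Hle|Hlt].
  - apply (mono_h (zfun M rho r) (fun u => wfun M r u / u)); auto.
    + intros u Hu. apply Hz. lra.
    + intros u Hu. apply Rdiv_le_0_compat; [apply (Hsign u); lra|lra].
  - apply (mono_h' (zfun M rho r) (fun u => wfun M r u / u)); [lra| |].
    + intros u Hu. apply Hz. lra.
    + intros u Hu. assert (wfun M r u <= 0) by (apply (Hsign u); lra).
      unfold Rdiv. assert (0 < / u) by (apply Rinv_0_lt_compat; lra). nra.
Qed.
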